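(* Define $f_n\in\mathbb Z[X]$ by $f_0=0$, $f_1=1$, $f_{n+1}=Xf_n-f_{n-1}$. Let $R$ be a commutative ring and $M\in M_2(R)$ with $\det M=1$ such that at least one off-diagonal entry of $M$ is not a zero divisor. If $n=2k+1$ is an odd positive integer, then $M^n=-I$ holds if and only if $t=\operatorname{tr}M$ satisfies $f_{k+1}(t)-f_k(t)=0$. *)

(* Defs.v *)
From HB Require Import structures.
From mathcomp Require Import all_boot all_order all_algebra.
Set Implicit Arguments. Unset Strict Implicit. Unset Printing Implicit Defensive.
Import GRing.Theory.
Local Open Scope ring_scope.

(* pair (f_n, f_{n+1}) with f_0 = 0, f_1 = 1, f_{n+1} = X f_n - f_{n-1} in Z[X] *)
Fixpoint fpair (n : nat) : {poly int} * {poly int} :=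
  match n with
  | 0%N => (0, 1)
  | m.+1 => let p := fpair m in (p.2, 'X * p.2 - p.1)
  end.

Definition fpoly (n : nat) : {poly int} := (fpair n).1.

Definition evalZ (R : nzRingType) (p : {poly int}) (x : R) : R :=
  (map_poly (fun z : int => z%:~R) p).[x].

Definition not_zero_divisor (R : comNzRingType) (a : R) : Prop :=
  forall x : R, a * x = 0 -> x = 0.

(* Main.v *)
Require Import Defs.
From HB Require Import structures.
From mathcomp Require Import all_boot all_order all_algebra ring.
Import GRing.Theory.
Local Open Scope ring_scope.

Lemma det22 (R : comNzRingType) (M : 'M[R]_2) : \det M = M 0 0 * M 1 1 - M 0 1 * M 1 0.
Proof.
rewrite (expand_det_row _ 0) !big_ord_recl big_ord0 /cofactor !det_mx11 !mxE /=.
rewrite expr0 expr1 mul1r.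
have -> : lift 0 (0:'I_1) = 1 :> 'I_2 by apply/val_inj.
have -> : lift 1 (0:'I_1) = 0 :> 'I_2 by apply/val_inj.
by rewrite addr0 mulN1r mulrN.
Qed.

Lemma ord2P (i : 'I_2) : i = 0 \/ i = 1.
Proof. case: i => [[|[|//]] p]; [left|right]; exact/val_inj. Qed.

Lemma sq22 (R : comNzRingType) (M : 'M[R]_2) : \det M = 1 -> M * M = \tr M *: M - 1.
Proof.
rewrite det22 => hd; apply/matrixP => i j.
rewrite -mulmxE !mxE /mxtrace !big_ord_recl big_ord0 ?mxE.
have -> : lift ord0 ord0 = 1 :> 'I_2 by apply/val_inj.
rewrite -[ord0]/(0 : 'I_2).
case: (ord2P i) => ->; case: (ord2P j) => -> /=; rewrite -hd big_ord0; ring.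
Qed.

Lemma aS (R : comNzRingType) (t : R) n :
  evalZ (fpoly n.+2) t = t * evalZ (fpoly n.+1) t - evalZ (fpoly n) t.
Proof.
rewrite /evalZ /fpoly /=.
by rewrite rmorphB rmorphM /= map_polyX hornerD hornerN mulrC hornerMX mulrC.
Qed.

Lemma a0 (R : comNzRingType) (t : R) : evalZ (fpoly 0) t = 0.
Proof. by rewrite /evalZ /fpoly /= map_poly0 horner0. Qed.

Lemma a1 (R : comNzRingType) (t : R) : evalZ (fpoly 1) t = 1.
Proof. by rewrite /evalZ /fpoly /= rmorph1 hornerC. Qed.

Section Main.
Variables (R : comNzRingType) (M : 'M[R]_2).
Hypothesis hsq : M * M = \tr M *: M - 1.
Let t := \tr M.
Let a n := evalZ (fpoly n) t.

Lemma powM n : M ^+ n.+1 = a n.+1 *: M - a n *: 1.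
Proof.
elim: n => [|n IH]; first by rewrite expr1 /a a1 a0 scale1r scale0r subr0.
rewrite exprSr IH /a aS -/t mulrBl -scalerAl hsq -scalerAl mul1r.
rewrite scalerBr scalerA scalerBl; apply/matrixP => i j; rewrite !mxE; ring.
Qed.

Let N := t *: 1 - M.

Lemma powN n : N ^+ n = a n.+1 *: 1 - a n *: M.
Proof.
elim: n => [|n IH]; first by rewrite expr0 /a a1 a0 scale1r scale0r subr0.
rewrite exprSr IH /a aS -/t /N mulrBl !mulrBr -!scalerAl -!scalerAr !mul1r !mulr1.
rewrite hsq; apply/matrixP => i j; rewrite !mxE; ring.
Qed.

Lemma MN : M * N = 1.
Proof. by rewrite /N mulrBr -scalerAr mulr1 hsq opprB addrC subrK. Qed.

Lemma commMN : GRing.comm M N.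
Proof. by rewrite /GRing.comm /N mulrBr mulrBl -scalerAr -scalerAl mulr1 mul1r. Qed.

Lemma key k : M ^+ (2 * k + 1)%N + 1 = M ^+ k * ((a k.+1 - a k) *: (M + 1)).
Proof.
have hk : M ^+ k * N ^+ k = 1 by rewrite -exprMn_comm ?MN ?expr1n //; exact: commMN.
rewrite -{1}hk addn1 mul2n -addnn -addnS exprD -mulrDr.
congr (_ * _); rewrite powN powM.
apply/matrixP => i j; rewrite !mxE; ring.
Qed.

End Main.

Theorem mainTheorem19 (R : comNzRingType) (M : 'M[R]_2) (k : nat) :
  \det M = 1 ->
  (not_zero_divisor (M 0 1) \/ not_zero_divisor (M 1 0)) ->
  (M ^+ (2 * k + 1)%N = - (1%:M) <->
   evalZ (fpoly k.+1) (\tr M) - evalZ (fpoly k) (\tr M) = 0).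
Proof.
move=> hd hnz; have hsq := @sq22 _ M hd.
have K := @key _ M hsq k.
split => [hM | hd0].
- move: K; rewrite hM addNr => K.
  set d := _ - _ in K *.
  have hk : (\tr M *: 1 - M) ^+ k * M ^+ k = 1.
    rewrite -exprMn_comm; last exact/esym/(@commMN _ M).
    by rewrite -(@commMN _ M) (@MN _ M hsq) expr1n.
  have : d *: (M + 1) = 0 by rewrite -[d *: _]mul1r -{1}hk -mulrA -K mulr0.
  move/matrixP => E.
  case: hnz => h; apply: h; [have := E 0 1|have := E 1 0]; rewrite !mxE /= addr0 => <-;
    by rewrite mulrC.
- apply/eqP; rewrite -addr_eq0; apply/eqP.
  by rewrite K hd0 scale0r mulr0.
Qed.
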